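(* Let $(X,\sigma,T)$ be as in the context and $\xi\in X_{eq}$. The following are equivalent: (1) every point of $\pi_{eq}^{-1}(\xi)$ separates the idempotents of $L$; (2) for each $x\in X$, $R^{\xi-\pi_{eq}(x)}_{\mathrm{ev}_x}\subset\mathcal R$; (3) for each $x\in\pi_{eq}^{-1}(\xi)$, $R^0_{\mathrm{ev}_x}\subset\mathcal R$.
   Context: $T$ abelian group acting continuously, minimally and non-distally by $\sigma$ on a compact Hausdorff space $X$. $E(X)$ is the Ellis semigroup (closure of $\{\sigma^t\}$ in $X^X$, pointwise topology). $\pi_{eq}:X\to X_{eq}$ is the maximal equicontinuous factor, $X_{eq}$ a compact abelian group with neutral element $0$. Fix a minimal idempotent $e$ and $L=E(X)e$; $L$ is a completely simple semigroup, so each $f\in L$ has a unique normal inverse $f^{-1}$ (with $ff^{-1}f=f$, $f^{-1}ff^{-1}=f^{-1}$, $ff^{-1}=f^{-1}f$); put $f^0=f^{-1}f$ (an idempotent with $f^0f=f$). Green's relation $\mathcal R$ on $L$: $(f_1,f_2)\in\mathcal R$ iff $f_1^0=f_2^0$. $J_L$ denotes the set of idempotents of $L$; a point $x\in X$ separates the idempotents of $L$ if $p\mapsto p(x)$ is injective on $J_L$. $\tilde\pi_{eq}:L\to X_{eq}$, $\tilde\pi_{eq}(f)=\pi_{eq}(f(x))-\pi_{eq}(x)$ (independent of $x$). For $x\in X$, $\zeta\in X_{eq}$: $R^\zeta_{\mathrm{ev}_x}=\{(f_1,f_2)\in L\times L: f_1(x)=f_2(x),\ \tilde\pi_{eq}(f_1)=\tilde\pi_{eq}(f_2)=\zeta\}$.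 *)

(* Defs.v *)
From HB Require Import structures.
From mathcomp Require Import all_boot all_order all_algebra.
From mathcomp Require Import all_classical all_reals all_analysis.
Set Implicit Arguments. Unset Strict Implicit. Unset Printing Implicit Defensive.
Import Order.TTheory GRing.Theory Num.Theory.
Local Open Scope classical_set_scope.
Local Open Scope ring_scope.

Section Dyn.
Context {T : zmodType}.

Definition is_action {X : topologicalType} (sigma : T -> X -> X) : Prop :=
  [/\ (forall x, sigma 0 x = x),
      (forall s t x, sigma (s + t) x = sigma s (sigma t x)) &
      (forall t, continuous (sigma t))].

Definition minimal_action {X : topologicalType} (sigma : T -> X -> X) : Prop :=
  forall A : set X, closed A -> A !=set0 -> (forall t, sigma t @` A `<=` A) ->
    A = setT.

Definition proximal {X : uniformType} (sigma : T -> X -> X) (x y : X) : Prop :=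
  forall U, entourage U -> exists t, U (sigma t x, sigma t y).

Definition distal {X : uniformType} (sigma : T -> X -> X) : Prop :=
  forall x y, proximal sigma x y -> x = y.

Definition equicontinuous_action {Y : uniformType} (tau : T -> Y -> Y) : Prop :=
  forall U, entourage U -> exists V, entourage V /\
    forall t y y', V (y, y') -> U (tau t y, tau t y').

(* pi : X -> Xeq is the maximal equicontinuous factor, Xeq a compact
   (Hausdorff) abelian group on which T acts by rotation via chi *)
Definition is_max_eq_factor {X : uniformType} (sigma : T -> X -> X)
    (Xeq : topologicalZmodType) (pi : X -> Xeq) : Prop :=
  [/\ compact [set: Xeq] /\ hausdorff_space Xeq, continuous pi,
      (forall z : Xeq, exists x, pi x = z),
      (exists chi : T -> Xeq, (forall s t, chi (s + t) = chi s + chi t) /\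
          forall t x, pi (sigma t x) = pi x + chi t) &
      (forall (Y : uniformType) (tau : T -> Y -> Y) (p : X -> Y),
         compact [set: Y] -> hausdorff_space Y -> is_action tau ->
         equicontinuous_action tau -> continuous p ->
         (forall y : Y, exists x, p x = y) ->
         (forall t x, p (sigma t x) = tau t (p x)) ->
         exists g : Xeq -> Y, continuous g /\ forall x, p x = g (pi x))].

Definition ellis {X : topologicalType} (sigma : T -> X -> X) : set (X -> X) :=
  closure (range (fun t => (sigma t : {ptws X -> X}))).
End Dyn.

Section Semigroup.
Context {X : Type}.
Implicit Types (E I L : set (X -> X)) (f g e : X -> X).

Definition left_ideal E I : Prop :=
  [/\ I !=set0, I `<=` E & forall f g, E f -> I g -> I (f \o g)].

Definition minimal_left_ideal E I : Prop :=
  left_ideal E I /\ forall J, left_ideal E J -> J `<=` I -> J = I.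

Definition minimal_idempotent E e : Prop :=
  [/\ E e, e \o e = e & exists I, minimal_left_ideal E I /\ I e].

Definition left_mul E e : set (X -> X) := [set f \o e | f in E].

Definition normal_inverse L f g : Prop :=
  [/\ L g, f \o g \o f = f, g \o f \o g = g & f \o g = g \o f].

(* Green's relation R on L: f1^0 = f2^0 with f^0 = f^{-1} f *)
Definition greenR L f1 f2 : Prop :=
  exists g1 g2, [/\ normal_inverse L f1 g1, normal_inverse L f2 g2 &
                     g1 \o f1 = g2 \o f2].

Definition idempotents L : set (X -> X) := [set p | L p /\ p \o p = p].

Definition separates_idempotents L (x : X) : Prop :=
  forall p q, idempotents L p -> idempotents L q -> p x = q x -> p = q.
End Semigroup.

(* tilde pi_eq (f) = pi (f x) - pi x ; R^zeta_{ev_x} *)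
Definition R_ev {X : Type} {Xeq : zmodType} (L : set (X -> X)) (pi : X -> Xeq)
    (x : X) (zeta : Xeq) (f1 f2 : X -> X) : Prop :=
  [/\ L f1, L f2, f1 x = f2 x, pi (f1 x) - pi x = zeta & pi (f2 x) - pi x = zeta].

(* Main.v *)
Require Import Defs.
From HB Require Import structures.
From mathcomp Require Import all_boot all_order all_algebra.
From mathcomp Require Import all_classical all_reals all_analysis.
Import Order.TTheory GRing.Theory Num.Theory.
Local Open Scope classical_set_scope.
Local Open Scope ring_scope.

Lemma cont_closure (A B : topologicalType) (phi : A -> B) (S : set A) (S' : set B) :
  continuous phi -> phi @` S `<=` S' -> phi @` closure S `<=` closure S'.
Proof.
move=> cphi sub _ [p Sp <-] N Np.
have : nbhs p (phi @^-1` N) by exact: cphi.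
move=> /Sp [q [Sq Nq]]; exists (phi q); split => //; apply: sub; by exists q.
Qed.

Section E.
Context {T : zmodType} {X : uniformType} (sigma : T -> X -> X).
Hypothesis act : is_action sigma.

Lemma postcomp_cont (g : X -> X) : continuous (fun h : {ptws X -> X} => (h \o g : {ptws X -> X})).
Proof.
move=> h; apply/(pointwise_cvgP _ (fmap_filter _ (nbhs_filter h))) => x /=.
exact: (@proj_continuous X (fun _ => X) (g x) h).
Qed.

Lemma precomp_cont t : continuous (fun h : {ptws X -> X} => (sigma t \o h : {ptws X -> X})).
Proof.
case: act => _ _ cs.
move=> h; apply/(pointwise_cvgP _ (fmap_filter _ (nbhs_filter h))) => x /=.
apply: (@continuous_comp _ _ _ (fun k : {ptws X -> X} => k x) (sigma t)).
  exact: (@proj_continuous X (fun _ => X) x h).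
exact: cs.
Qed.

Lemma Ecomp f g : ellis sigma f -> ellis sigma g -> ellis sigma (f \o g).
Proof.
case: act => _ sM _.
have step1 t h : ellis sigma h -> ellis sigma (sigma t \o h).
  move=> Eh; have := @cont_closure _ _ _ (range (fun t => (sigma t : {ptws X -> X})))
     (range (fun t => (sigma t : {ptws X -> X}))) (precomp_cont t).
  apply.
    move=> _ [_ [s _ <-] <-]; exists (t + s) => //.
    by apply/funext => x /=; rewrite sM.
  by exists h.
move=> Ef Eg.
have := @cont_closure _ _ _ (range (fun t => (sigma t : {ptws X -> X})))
     (ellis sigma : set {ptws X -> X}) (postcomp_cont g).
have cE : ellis sigma = closure (ellis sigma : set {ptws X -> X}).
  rewrite /ellis; have := @closure_id {ptws X -> X} (closure (range (fun t => (sigma t : {ptws X -> X})))); case=> + _; apply; exact: closed_closure.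
rewrite -cE; apply.
  move=> _ [_ [s _ <-] <-]; exact: step1.
by exists f.
Qed.
End E.

Lemma tz_cvgB (M : topologicalZmodType) {I : Type} (F : set_system I) {FF : Filter F}
  (f g : I -> M) a b : f @ F --> a -> g @ F --> b -> (fun i => f i - g i) @ F --> a - b.
Proof.
move=> fa gb; apply: (@continuous2_cvg _ _ _ _ F FF f g (fun u v => u - v)) => //.
exact: (@sub_continuous M (a, b)).
Qed.

Section H.
Context {T : zmodType} {X : uniformType} (sigma : T -> X -> X)
  (Xeq : topologicalZmodType) (pi : X -> Xeq).
Hypothesis hXeq : hausdorff_space Xeq.
Hypothesis cpi : continuous pi.
Hypothesis chi : T -> Xeq.
Hypothesis hchi : forall t x, pi (sigma t x) = pi x + chi t.

Lemma eval_cont x : continuous (fun h : {ptws X -> X} => pi (h x)).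
Proof.
move=> h; apply: (@continuous_comp _ _ _ (fun k : {ptws X -> X} => k x) pi).
  exact: (@proj_continuous X (fun _ => X) x h).
exact: cpi.
Qed.

Lemma Ehom f x y : ellis sigma f -> pi (f x) - pi x = pi (f y) - pi y.
Proof.
pose Phi := fun h : {ptws X -> X} => (pi (h x) - pi x) - (pi (h y) - pi y).
have cPhi : continuous Phi.
  move=> h; rewrite /Phi.
  apply: (@tz_cvgB _ _ _ (nbhs_filter h)).
    apply: (@tz_cvgB _ _ _ (nbhs_filter h)); [exact: eval_cont|exact: cvg_cst].
  apply: (@tz_cvgB _ _ _ (nbhs_filter h)); [exact: eval_cont|exact: cvg_cst].
have cl : closed (Phi @^-1` [set 0]).
  apply: preimage_closed; first by move=> ? _; exact: cPhi.
  exact/accessible_closed_set1/hausdorff_accessible.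
have sub : ellis sigma `<=` Phi @^-1` [set 0].
  have := proj1 (@closure_id {ptws X -> X} _) cl => ->; rewrite /ellis; apply: (@closureS {ptws X -> X}).
  move=> _ [t _ <-]; rewrite /Phi /= !hchi.
  by rewrite !(addrC (pi _)) !addrK subrr.
by move=> /sub /= /eqP; rewrite subr_eq0 => /eqP.
Qed.
End H.
Section Alg.
Context {X : Type} (E : set (X -> X)).
Hypothesis Ec : forall f g, E f -> E g -> E (f \o g).
Variable e : X -> X.
Hypothesis me : minimal_idempotent E e.
Let L := left_mul E e.

Let pw {f g : X -> X} : f = g -> forall x, f x = g x.
Proof. by move=> ->. Qed.
Let pwc {a b c : X -> X} : a \o b = c -> forall x, a (b x) = c x.
Proof. by move=> <-. Qed.

Lemma LE f : L f -> E f.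
Proof. by case: me => Ee _ _ [f' Ef' <-]; exact: Ec. Qed.

Lemma Lc f g : E f -> L g -> L (f \o g).
Proof. by move=> Ef [g' Eg' <-]; exists (f \o g') => //; exact: Ec. Qed.

Lemma Le : L e.
Proof. by case: me => Ee ee _; exists e. Qed.

Lemma Lr f : L f -> f \o e = f.
Proof.
case: me => _ ee _ [f' _ <-]; apply/funext => x /=.
by rewrite (pwc ee).
Qed.

Lemma Lmin a b : L a -> L b -> exists k, L k /\ k \o a = b.
Proof.
case: me => Ee ee [I [[[Iid IE Iop] Imin] Ie]].
have LI : L `<=` I by move=> _ [f' Ef' <-]; exact: Iop.
have LL : left_ideal E L.
  split; [by exists e; exact: Le | exact: LE | by move=> f g Ef Lg; exact: Lc].
have LeqI : L = I by exact: Imin.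
move=> La Lb.
pose La' := [set k \o a | k in L].
have : left_ideal E La'.
  split.
  - by exists (e \o a), e => //; exact: Le.
  - by move=> _ [k Lk <-]; apply: Ec; exact: LE.
  - move=> f _ Ef [k Lk <-]; exists (f \o k) => //; exact: Lc.
move=> /Imin; rewrite -LeqI => H.
have : La' = L.
  apply: H => _ [k Lk <-]; apply: Lc => //; exact: LE.
move=> eq; have : La' b by rewrite eq.
by case=> k Lk <-; exists k.
Qed.

Lemma Lid u x : L u -> u \o u = u -> L x -> x \o u = x.
Proof.
move=> Lu uu Lx; have [k [_ <-]] := Lmin _ _ Lu Lx.
by apply/funext => z /=; rewrite (pwc uu).
Qed.

Lemma ninv f : L f -> exists g, normal_inverse L f g.
Proof.
case: me => Ee ee _.
move=> Lf.
have La : L (e \o f) by apply: Lc.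
have [h0 [Lh0 h0a]] := Lmin _ _ La Le.
pose h := e \o h0.
have Lh : L h by apply: Lc.
have he : h \o e = h by exact: Lr.
have hf : forall x, h (f x) = e x.
  move=> x; rewrite -(pw he) /= /h.
  by have := pw h0a x => /= ->; rewrite (pwc ee).
have eh : forall x, e (h x) = h x by move=> x; rewrite /h /= (pwc ee).
have fe : forall x, f (e x) = f x by exact: pwc (Lr _ Lf).
pose u := f \o h.
have Lu : L u by apply: Lc => //; exact: LE.
have uu : u \o u = u by apply/funext => x; rewrite /u /= hf fe.
have uf : forall x, u (f x) = f x by move=> x; rewrite /u /= hf fe.
have [k0 [Lk0 k0f]] := Lmin _ _ Lf Lu.
pose k := u \o k0 \o u.
have Lk : L k by apply: (Lc _ _ _ Lu); apply: Ec; exact: LE.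
have uk : forall x, u (k x) = k x by move=> x; rewrite /k /= (pwc uu).
have ku : forall x, k (u x) = k x by move=> x; rewrite /k /= (pwc uu).
have kf : forall x, k (f x) = u x.
  by move=> x; rewrite /k /= uf (pwc k0f) (pwc uu).
have [k2 [Lk2 k2k]] := Lmin _ _ Lk Lu.
have fk : forall x, f (k x) = u x.
  move=> x; transitivity (u (f (k x))); first by rewrite uf.
  rewrite -(pwc k2k) kf uk.
  exact: (pwc k2k x).
exists k; split => //; apply/funext => x /=.
- by rewrite fk uf.
- by rewrite kf uk.
- by rewrite fk kf.
Qed.

Lemma idem_green p q : idempotents L p -> idempotents L q -> greenR L p q -> p = q.
Proof.
have key : forall p g, p \o p = p -> normal_inverse L p g -> g \o p = p.
  move=> p0 g pp [_ pgp _ com]; rewrite -{2}pgp com; apply/funext => x /=.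
  by rewrite (pwc pp).
move=> [_ pp] [_ qq] [g1 [g2 [n1 n2 eq]]].
by rewrite -(key _ _ pp n1) -(key _ _ qq n2).
Qed.

Lemma ninv_idem f g : L f -> normal_inverse L f g -> idempotents L (g \o f).
Proof.
move=> Lf [Lg _ gfg _]; split; first by apply: Lc => //; exact: LE.
by apply/funext => z /=; exact: (pw gfg (f z)).
Qed.

Lemma ninv_fix f g y : normal_inverse L f g -> g (f (f y)) = f y.
Proof.
move=> [_ fgf _ com]; transitivity (f (g (f y))); [exact: (esym (pw com (f y))) | exact: (pw fgf y)].
Qed.
End Alg.

Theorem mainTheorem6 (T : zmodType) (X : uniformType) (sigma : T -> X -> X)
    (Xeq : topologicalZmodType) (pi : X -> Xeq) (e : X -> X) (xi : Xeq) :
  compact [set: X] -> hausdorff_space X ->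
  is_action sigma -> minimal_action sigma -> ~ distal sigma ->
  is_max_eq_factor sigma pi ->
  minimal_idempotent (ellis sigma) e ->
  let L := left_mul (ellis sigma) e in
  ((forall x, pi x = xi -> separates_idempotents L x) <->
   (forall x f1 f2, R_ev L pi x (xi - pi x) f1 f2 -> greenR L f1 f2)) /\
  ((forall x f1 f2, R_ev L pi x (xi - pi x) f1 f2 -> greenR L f1 f2) <->
   (forall x, pi x = xi -> forall f1 f2, R_ev L pi x 0 f1 f2 -> greenR L f1 f2)).
Proof.
move=> _ _ act _ _ [[_ hXeq] cpi _ [chi [_ hchi]] _] me L.
have Ec := @Ecomp T X sigma act.
have Eh := @Ehom T X sigma Xeq pi hXeq cpi chi hchi.
have idem0 p : idempotents L p -> forall x, pi (p x) = pi x.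
  move=> [Lp pp] x.
  have Ep := @LE _ _ Ec _ me _ Lp.
  have := Eh p x (p x) Ep; rewrite (_ : p (p x) = p x); last by rewrite -[in RHS]pp.
  by rewrite subrr => H; apply/subr0_eq; rewrite -H.
have fromd f x : pi (f x) - pi x = xi - pi x -> pi (f x) = xi.
  by move=> /(congr1 (fun z => z + pi x)); rewrite !subrK.
split; split.
- move=> H1 x f1 f2 [Lf1 Lf2 fx d1 _].
  have [g1 n1] := @ninv _ _ Ec _ me _ Lf1.
  have [g2 n2] := @ninv _ _ Ec _ me _ Lf2.
  exists g1, g2; split => //.
  apply: (H1 (f1 x) (fromd _ _ d1)).
  + exact: (@ninv_idem _ _ Ec _ me _ _ Lf1 n1).
  + exact: (@ninv_idem _ _ Ec _ me _ _ Lf2 n2).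
  + rewrite /= (@ninv_fix _ _ _ _ _ _ n1) {2}fx (@ninv_fix _ _ _ _ _ _ n2); exact: fx.
- move=> H2 x px p q Ip Iq pqx.
  apply: (@idem_green _ _ _ _ _ Ip Iq); apply: (H2 x).
  by split => //; [case: Ip | case: Iq | rewrite idem0 // px subrr | rewrite idem0 // px subrr].
- move=> H2 x px f1 f2 R; apply: (H2 x); by rewrite px subrr.
- move=> H3 x f1 f2 [Lf1 Lf2 fx d1 _].
  have [g1 n1] := @ninv _ _ Ec _ me _ Lf1.
  have [g2 n2] := @ninv _ _ Ec _ me _ Lf2.
  exists g1, g2; split => //.
  have I1 := @ninv_idem _ _ Ec _ me _ _ Lf1 n1.
  have I2 := @ninv_idem _ _ Ec _ me _ _ Lf2 n2.
  apply: (@idem_green _ _ _ _ _ I1 I2); apply: (H3 (f1 x) (fromd _ _ d1)).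
  split; [by case: I1 | by case: I2 | | by rewrite idem0 // subrr | by rewrite idem0 // subrr].
  rewrite /= (@ninv_fix _ _ _ _ _ _ n1) {2}fx (@ninv_fix _ _ _ _ _ _ n2); exact: fx.
Qed.
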